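(* Let $X$ be a complete separable metric space, let $E\subset X$ with $\mathcal{H}^n(E)<\infty$, and for each $m\in\mathbb{N}$ let $\nu_m$ be a finite Borel measure on $X$ with $\mathcal{H}^n|_E\ge\nu_1\ge\nu_2\ge\dots\ge0$ and $\|\nu_m\|\to0$. Then for $\mathcal{H}^n$-almost every $x\in X$, $$\lim_{m\to\infty}\lim_{r\to0}\frac{\nu_m(B(x,r))}{r^n}=0.$$
   Context: $\mathcal{H}^n$ is $n$-dimensional Hausdorff measure, $B(x,r)$ the closed ball, $\|\nu\|$ the total mass, and inequalities between measures are setwise. *)

(* Defs.v *)
From HB Require Import structures.
From mathcomp Require Import all_boot all_order all_algebra.
From mathcomp Require Import all_classical all_reals all_analysis.
Set Implicit Arguments. Unset Strict Implicit. Unset Printing Implicit Defensive.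
Import Order.TTheory GRing.Theory Num.Theory.
Import numFieldNormedType.Exports.
Local Open Scope classical_set_scope.
Local Open Scope ring_scope.

(* Volume of the unit ball of R^n: omega_0 = 1, omega_1 = 2,
   omega_(n+2) = 2 pi / (n+2) * omega_n  (= pi^(n/2) / Gamma(n/2+1)). *)
Fixpoint unit_ball_vol (R : realType) (n : nat) : R :=
  match n with
  | 0%N => 1
  | 1%N => 2
  | (k.+2)%N => (2 * pi / k.+2%:R) * unit_ball_vol R k
  end.

Definition cball (R : realType) (X : metricType R) (x : X) (r : R) : set X :=
  [set y | mdist x y <= r].

Definition diam (R : realType) (X : metricType R) (C : set X) : \bar R :=
  maxe 0%E (ereal_sup [set (mdist p.1 p.2)%:E | p in C `*` C]).

Definition haus_term (R : realType) (X : metricType R) (n : nat) (C : set X)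
  : \bar R :=
  if pselect (C = set0) then 0%E
  else if diam C == +oo%E then +oo%E
  else (unit_ball_vol R n / 2 ^+ n * (fine (diam C)) ^+ n)%:E.

Definition haus_delta (R : realType) (X : metricType R) (n : nat) (delta : R)
  (A : set X) : \bar R :=
  ereal_inf [set (\sum_(0 <= i <oo) haus_term n (C i))%E
            | C in [set C : nat -> set X |
                    A `<=` \bigcup_i C i /\ forall i, (diam (C i) <= delta%:E)%E]].

(* n-dimensional Hausdorff (outer) measure H^n = lim_{delta -> 0} H^n_delta
   = sup_{delta > 0} H^n_delta (the map delta |-> H^n_delta is nonincreasing). *)
Definition hausdorff (R : realType) (X : metricType R) (n : nat) (A : set X)
  : \bar R :=
  ereal_sup [set haus_delta n delta A | delta in [set d : R | 0 < d]].

(* MathComp-Analysis measurable types must be pointed, so the carrier is the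
   alias [borel_type x0] of X, pointed by a witness x0 : X (X nonempty). *)
Definition borel_type {R : realType} {X : metricType R} (x0 : X) : Type := X.
Section borel_instance.
Context (R : realType) (X : metricType R) (x0 : X).
HB.instance Definition _ := Choice.on (borel_type x0).
HB.instance Definition _ := isPointed.Build (borel_type x0) x0.
Lemma borel_sigmaC (A : set (borel_type x0)) :
  <<s @open X >> A -> <<s @open X >> (~` A).
Proof. by move=> sGA; rewrite -setTD; exact: sigma_algebraCD. Qed.
HB.instance Definition _ := @isMeasurable.Build (sigma_display (@open X))
  (borel_type x0) <<s @open X >> (@sigma_algebra0 _ setT _) (@borel_sigmaC)
  (@sigma_algebra_bigcup _ setT _).
End borel_instance.

(* Main.v *)
Require Import Defs.
From HB Require Import structures.
From mathcomp Require Import all_boot all_order all_algebra.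
From mathcomp Require Import all_classical all_reals all_analysis.
Import Order.TTheory GRing.Theory Num.Theory.
Import numFieldNormedType.Exports.
Local Open Scope classical_set_scope.
Local Open Scope ring_scope.

From mathcomp Require Import ring lra.

Section Vit.
Context (R : realType) (X : metricType R).

Lemma vitali_metric (A : set X) (rho : X -> R) (K : R) :
  (forall x, A x -> 0 < rho x <= K) ->
  exists G, [/\ G `<=` A, trivIset G (fun y => cball y (rho y)) &
   forall x, A x -> exists2 y, G y & mdist y x <= 3 * rho y].
Proof.
move=> rhoA.
pose B := fun y => cball y (rho y).
pose P := fun G : set X => [/\ G `<=` A, trivIset G B &
  forall x, A x -> (exists2 y, G y & B x `&` B y !=set0) ->
    exists y, [/\ G y, B x `&` B y !=set0 & rho x <= 2 * rho y]].
have [G [[GA tG propG] Gmax]] : exists G, P G /\ forall H, G `<` H -> ~ P H.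
  apply: Zorn_bigcup => F FP Ftot; split.
  - by move=> x [G FG Gx]; have [+ _ _] := FP _ FG; apply.
  - move=> i j [Gi FGi Gii] [Gj FGj Gjj] ij.
    have [GiGj|GjGi] := Ftot _ _ FGi FGj.
    + by have [_ + _] := FP _ FGj; apply => //; apply: GiGj.
    + by have [_ + _] := FP _ FGi; apply => //; apply: GjGi.
  - move=> x Ax [y [G FG Gy] Bxy].
    have [_ _ +] := FP _ FG; move=> /(_ x Ax) [|z [Gz Bxz rz]]; first by exists y.
    by exists z; split => //; exists G.
have cover : forall x, A x -> exists2 y, G y & B x `&` B y !=set0.
  move=> x Ax; apply: contrapT => nocov.
  pose A' := [set x | A x /\ ~ exists2 y, G y & B x `&` B y !=set0].
  have A'x : A' x by split.
  have hs : has_sup (rho @` A').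
    split; first by exists (rho x), x.
    by exists K => _ [z [Az _] <-]; have /andP[] := rhoA _ Az.
  have s0 : 0 < sup (rho @` A').
    apply: (@lt_le_trans _ _ (rho x)); first by have /andP[] := rhoA _ Ax.
    by apply: sup_upper_bound => //; exists x.
  have h2 : 0 < sup (rho @` A') / 2 by rewrite divr_gt0.
  have := @sup_adherent _ _ _ h2 hs.
  move=> [_ [x1 A'x1 <-] x1s].
  have rx1 : 0 < rho x1 by have /andP[] := rhoA _ A'x1.1.
  have Bxx z : 0 < rho z -> B z z by move=> rz; rewrite /B /cball /= mdistxx ltW.
  have x1G : ~ G x1.
    move=> Gx1; apply: A'x1.2; exists x1 => //; exists x1; split; exact: Bxx.
  apply: (Gmax (G `|` [set x1])).
    split; first by move=> z Gz; left.
    by move=> H; apply: x1G; apply: H; right.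
  split.
  - by move=> z [/GA|->]//; case: A'x1.
  - move=> i j [Gi|->] [Gj|->] Bij //.
    + exact: tG.
    + by exfalso; apply: A'x1.2; exists i => //; rewrite setIC.
    + by exfalso; apply: A'x1.2; exists j.
  - move=> z Az [y Gy Bzy].
    have [Hz|Hz] := pselect (exists2 y, G y & B z `&` B y !=set0).
      by have [w [Gw Bzw rw]] := propG _ Az Hz; exists w; split => //; left.
    case: Gy => [Gy|yx1]; first by exfalso; apply: Hz; exists y.
    have yx : y = x1 by [].
    exists x1; split; [by right|by rewrite -yx|].
    have : rho z <= sup (rho @` A').
      by apply: sup_upper_bound => //; exists z => //; split.
    move=> /le_trans; apply; move: x1s; set s := sup _ => ?; lra.
exists G; split => // x Ax.
have [y Gy Bxy] := cover x Ax.
have [w [Gw Bxw rw]] := propG _ Ax (ex_intro2 _ _ y Gy Bxy).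
exists w => //.
case: Bxw => z [Bxz Bwz]; rewrite /B /cball /= in Bxz Bwz.
rewrite (le_trans (metric_triangle _ z _))//.
rewrite (_ : 3 = 1 + 2)// mulrDl mul1r lerD//.
by rewrite metric_sym (le_trans Bxz).
Qed.
End Vit.

Section H.
Context {R : realType} {X : metricType R}.

Lemma cball_closed (x : X) r : closed (cball x r).
Proof.
rewrite -[cball x r]setCK; apply: open_closedC.
rewrite openE => y /= ny; have {}ny : r < mdist x y by rewrite ltNge; apply/negP. rewrite /interior.
apply/metricType_numDomainType.nbhs_mdistP; exists (mdist x y - r); first by rewrite /= subr_gt0.
move=> z /= yz; rewrite /cball /= => xz.
have := metric_triangle x z y; rewrite [mdist z y]metric_sym; lra.
Qed.

Lemma cball_measurable (x0 : X) (x : X) r : measurable (cball x r : set (borel_type x0)).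
Proof.
rewrite -[cball x r]setCK; apply: measurableC.
apply: sub_sigma_algebra; rewrite /= -closedC setCK; exact: cball_closed.
Qed.

Lemma diam_le (C : set X) s : 0 <= s ->
  (forall p q, C p -> C q -> mdist p q <= s) -> (diam C <= s%:E)%E.
Proof.
move=> s0 H; rewrite /diam ge_max lee_fin s0 /=.
apply: ub_ereal_sup => _ [[p q] [/= Cp Cq] <-]; rewrite lee_fin; exact: H.
Qed.

Lemma unit_ball_vol_ge0 n : 0 <= unit_ball_vol R n.
Proof.
elim/ltn_ind: n => -[|[|k]] IH //=.
by rewrite mulr_ge0 ?IH// divr_ge0// mulr_ge0// pi_ge0.
Qed.

Lemma haus_term_cball n (y : X) {r} : 0 < r ->
  (haus_term n (cball y (3 * r)) <= (unit_ball_vol R n * 3 ^+ n * r ^+ n)%:E)%E.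
Proof.
move=> r0.
have hd : (diam (cball y (3 * r)) <= (6 * r)%:E)%E.
  apply: diam_le; first lra.
  move=> p q; rewrite /cball /= => yp yq.
  have := metric_triangle p y q; rewrite [mdist p y]metric_sym; lra.
have d0 : (0 <= diam (cball y (3 * r)))%E by rewrite /diam le_max lexx.
rewrite /haus_term; destruct (pselect _) as [e0|ne]; rewrite /=.
  by rewrite lee_fin !mulr_ge0 ?exprn_ge0 ?unit_ball_vol_ge0 // ltW.
move: hd d0; case: (diam _) => //= d; rewrite !lee_fin => hd d0.
rewrite (_ : unit_ball_vol R n * 3 ^+ n * r ^+ n = unit_ball_vol R n / 2 ^+ n * (6 * r) ^+ n).
  by rewrite ler_wpM2l ?lerXn2r ?nnegrE ?mulr_ge0 ?divr_ge0 ?unit_ball_vol_ge0 ?exprn_ge0//; lra.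
rewrite (_ : (6:R) = 2 * 3); last lra.
rewrite !exprMn -!mulrA; congr (_ * _); rewrite !mulrA mulVf ?mul1r //.
Qed.
Lemma haus_term_ge0 n (C : set X) : (0 <= haus_term n C)%E.
Proof.
rewrite /haus_term; destruct (pselect _) as [e0|ne]; rewrite //=.
case: ifP => // _; rewrite lee_fin mulr_ge0 ?divr_ge0 ?unit_ball_vol_ge0 ?exprn_ge0 ?fine_ge0//.
by rewrite /diam le_max lexx.
Qed.

Lemma haus_term_set0 n : haus_term n (@set0 X) = 0%E.
Proof. by rewrite /haus_term; destruct (pselect _) as [e0|ne]. Qed.
End H.

Section L.
Context (R : realType).
Local Open Scope ereal_scope.

Lemma limsup_mono (f g : R -> \bar R) :
  (forall r, f r <= g r) -> limf_esup f 0%R^'+ <= limf_esup g 0%R^'+.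
Proof.
move=> fg; rewrite !limf_esupE; apply: le_ereal_inf_tmp => _ [V FV <-].
apply: (@le_trans _ _ (ereal_sup (f @` V))).
  by apply: ereal_inf_lbound; exists V.
apply: ge_ereal_sup => _ [r Vr <-]; apply: le_ereal_sup_tmp.
by exists (g r) => //; exists r.
Qed.

Lemma limsup_gt (f : R -> \bar R) (s : \bar R) (rho : R) : (0 < rho)%R ->
  s < limf_esup f 0%R^'+ -> exists r, [/\ (0 < r)%R, (r < rho)%R & s < f r].
Proof.
move=> rho0; rewrite limf_esupE => slt.
have FV : (0%R : R)^'+ [set r | (0 < r)%R /\ (r < rho)%R].
  near=> r; split; near: r; [exact: nbhs_right_gt | exact: nbhs_right_lt].
have : s < ereal_sup (f @` [set r | (0 < r)%R /\ (r < rho)%R]).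
  apply: (lt_le_trans slt); apply: ereal_inf_lbound; by exists [set r | (0 < r)%R /\ (r < rho)%R].
move=> /ereal_sup_gt [_ [r [r0 rr] <-] sfr].
by exists r.
Unshelve. all: by end_near.
Qed.

Lemma limsup_ge0 (f : R -> \bar R) : (forall r, (0 < r)%R -> 0 <= f r) ->
  0 <= limf_esup f 0%R^'+.
Proof.
move=> f0; rewrite limf_esupE; apply: le_ereal_inf_tmp => _ [V FV <-].
have [r [Vr r0]] : exists r, V r /\ (0 < r)%R.
  have : (0%R:R)^'+ (fun r => V r /\ (0 < r)%R).
    by apply: filterI => //; exact: nbhs_right_gt.
  by move/filter_ex.
apply: le_ereal_sup_tmp; exists (f r); [by exists r | exact: f0].
Qed.
End L.

Theorem lemma5p5 (R : realType) (X : metricType R)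
  (x0 : X)
  (X_complete : forall F : set_system X, ProperFilter F -> cauchy F -> exists x : X, F --> x)
  (X_separable : exists D : set X, countable D /\ closure D = setT)
  (n : nat) (E : set X) (HE : (hausdorff n E < +oo)%E)
  (nu : nat -> {measure set (borel_type x0) -> \bar R})
  (nu_finite : forall m, (nu m setT < +oo)%E)
  (nu_le_HE : forall A : set (borel_type x0), measurable A ->
     (nu 0%N A <= hausdorff n (A `&` E))%E)
  (nu_decr : forall (m : nat) (A : set (borel_type x0)), measurable A ->
     (nu m.+1 A <= nu m A)%E)
  (nu_mass : (fun m => nu m setT) @ \oo --> 0%E) :
  exists N : set X, hausdorff n N = 0%E /\
    forall x : X, ~ N x ->
      (fun m : nat =>
         limf_esup (fun r : R => (nu m (cball x r) * (r ^- n)%:E)%E) 0%R^'+)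
        @ \oo --> 0%E.
Proof.
pose f m x r := (nu m (cball x r) * (r ^- n)%:E)%E.
pose a m x := limf_esup (f m x) 0%R^'+.
have mB x r : measurable (cball x r : set (borel_type x0)) by exact: cball_measurable.
have f_ge0 m x r : (0 < r)%R -> (0 <= f m x r)%E.
  by move=> r0; rewrite /f mule_ge0// lee_fin invr_ge0 exprn_ge0// ltW.
have a_ge0 m x : (0 <= a m x)%E by apply: limsup_ge0 => r r0; exact: f_ge0.
have f_decr m x r : (f m.+1 x r <= f m x r)%E.
  have [r0|r0] := leP 0%R r.
    by rewrite /f lee_wpmul2r ?lee_fin ?invr_ge0 ?exprn_ge0// nu_decr.
  rewrite /f; have -> : cball x r = set0.
    by apply/seteqP; split => // z; rewrite /cball /= => h; have := mdist_ge0 x z; lra.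
  by rewrite !measure0 !mul0e.
have a_decr m x : (a m.+1 x <= a m x)%E by apply: limsup_mono => r; exact: f_decr.
pose N := [set x | ~ ((fun m => a m x) @ \oo --> 0%E)].
exists N; split; last first.
  by move=> x Nx; apply: contrapT.
have NK x : N x -> exists k : nat, forall m, ((k.+1%:R)^-1%:E < a m x)%E.
  move=> Nx.
  have := @ereal_nonincreasing_cvgn _ (fun m => a m x).
  move=> /(_ (iffLR (nonincreasing_seqP _) (fun m => a_decr m x))).
  set L := ereal_inf _ => cvL.
  have L0 : (0 <= L)%E by apply: le_ereal_inf_tmp => _ [m _ <-].
  have Lm m : (L <= a m x)%E by apply: ereal_inf_lbound; exists m.
  move: L0; rewrite le_eqVlt => /orP[/eqP L0|L0].
    by exfalso; apply: Nx; rewrite L0.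
  clear cvL; move: L0 Lm; case: L => [l||] //= l0 Lm.
    exists (Num.truncn (l^-1)) => m; apply: lt_le_trans (Lm m).
    rewrite lte_fin invf_plt ?posrE ?ltr0n//.
    exact: truncnS_gt.
  by exists 0%N => m; apply: lt_le_trans (Lm m); rewrite ltey.
apply/eqP; rewrite eq_le; apply/andP; split; last first.
  apply: le_ereal_sup_tmp; exists (haus_delta n 1 N); first by exists 1%R => //=.
  apply: le_ereal_inf_tmp => _ [C _ <-]; apply: nneseries_ge0 => i _.
  by move=> _; exact: haus_term_ge0.
rewrite /hausdorff; apply: ge_ereal_sup => _ [del del0 <-]; rewrite /= in del0.
apply/lee_addgt0Pr => eps eps0; rewrite add0e.
pose c := unit_ball_vol R n * 3 ^+ n + 1.
have c0 : (0 < c)%R by rewrite /c ltr_pwDr// mulr_ge0 ?unit_ball_vol_ge0 ?exprn_ge0.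
pose e' := eps / c.
have e'0 : (0 < e')%R by rewrite divr_gt0.
have HM0 : forall k, exists m,
    (nu m setT <= ((e' / (2 ^ k.+1)%:R) / k.+1%:R)%:E)%E.
  move=> k.
  have t0 : (0 < (e' / (2 ^ k.+1)%:R) / k.+1%:R)%R by rewrite !divr_gt0// ltr0n expn_gt0.
  have H : ((fun m => nu m setT) @ \oo) [set y | (y < ((e' / (2 ^ k.+1)%:R) / k.+1%:R)%:E)%E].
    apply: nu_mass; apply: open_nbhs_nbhs; split; first exact: open_ereal_lt_ereal.
    by rewrite /= lte_fin.
  by case: H => m _ Hm; exists m; apply/ltW/Hm => /=.
have [M HM] := choice HM0.
pose w k : {nonneg R} := NngNum (ler0n R k.+1).
pose mu := mseries (fun k => mscale (w k) (nu (M k))) 0.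
have muT : (mu setT <= e'%:E)%E.
  rewrite /mu /mseries.
  apply: le_trans (epsilon_trick0 xpredT (ltW e'0)).
  apply: lee_nneseries; first by move=> k _ _; rewrite /mscale mule_ge0.
  move=> k _.
  rewrite /mscale /=.
  apply: le_trans (lee_wpmul2l _ (HM k)) _; first by rewrite lee_fin.
  rewrite -EFinM lee_fin le_eqVlt; apply/orP; left; apply/eqP.
  by rewrite /= mulrC divfK.
have muk k (B : set (borel_type x0)) : ((k.+1%:R)%:E * nu (M k) B <= mu B)%E.
  rewrite /mu /= /mseries.
  apply: le_trans (nneseries_lim_ge k.+1 _); last by move=> i _ _; rewrite /mscale mule_ge0.
  rewrite big_nat_recr //= /mscale /=.
  by rewrite leeDr // sume_ge0 // => i _; rewrite mule_ge0.
have HK0 : forall x, exists k : nat, N x -> forall m, ((k.+1%:R)^-1%:E < a m x)%E.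
  move=> x; have [Nx|Nx] := pselect (N x); last by exists 0%N.
  by have [k Hk] := NK x Nx; exists k.
have [K HK] := choice HK0.
have del6 : (0 < del / 6)%R by rewrite divr_gt0.
have Hrho0 : forall x, exists r : R, N x -> [/\ (0 < r)%R, (r < del / 6)%R &
    ((K x).+1%:R^-1%:E < f (M (K x)) x r)%E].
  move=> x; have [Nx|Nx] := pselect (N x); last by exists 0%R.
  have [r [r0 rd hr]] := @limsup_gt R _ _ _ del6 (HK x Nx (M (K x))).
  by exists r.
have [rho Hrho] := choice Hrho0.
have rho_mu x : N x -> (((rho x) ^+ n)%:E <= mu (cball x (rho x)))%E.
  move=> Nx; have [r0 _ hf] := Hrho x Nx.
  apply: le_trans (muk (K x) _).
  move: hf; rewrite /f.
  have nuB0 : (0 <= nu (M (K x)) (cball x (rho x)))%E by [].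
  have nuBT : (nu (M (K x)) (cball x (rho x)) < +oo)%E.
    apply: le_lt_trans (nu_finite (M (K x))).
    by apply: le_measure; rewrite ?inE //.
  move: nuB0 nuBT; case: (nu (M (K x)) (cball x (rho x))) => [b| |] //= b0 _.
  rewrite -EFinM !lte_fin lee_fin => hb.
  have v0 : (0 < (K x).+1%:R :> R)%R by [].
  have u0 : (0 < rho x ^+ n)%R by rewrite exprn_gt0.
  have : ((K x).+1%:R^-1 * rho x ^+ n < b)%R by rewrite -ltr_pdivlMr.
  move=> /ltW /(ler_wpM2l (ltW v0)); apply: le_trans.
  by rewrite mulrA mulfV ?mul1r // gt_eqF.
have [G [GN tG covG]] := @vitali_metric R X N rho (del / 6)
  (fun x Nx => let: And3 r0 rd _ := Hrho x Nx in introT andP (conj r0 (ltW rd))).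
have [D [cD DT]] := X_separable.
have [g hg] : exists g : nat -> X, D `<=` range g.
  have /pcard_surjP [g hg] := (cD : @countable (borel_type x0) D).
  by exists g => z Dz; have [j _ <-] := hg z Dz; exists j.
have ex_j y : G y -> exists j, mdist y (g j) < rho y.
  move=> Gy; have [r0 _ _] := Hrho y (GN y Gy).
  have : closure D y by rewrite DT.
  move=> /(_ (ball y (rho y)) (nbhsx_ballx y (rho y) r0)) [z [Dz yz]].
  have [j _ gj] := hg z Dz; exists j; rewrite gj.
  by rewrite ballEmdist in yz.
pose Sel j y := [/\ G y, mdist y (g j) < rho y &
  forall i, (i < j)%N -> ~ (mdist y (g i) < rho y)].
have Sel_uniq j y y' : Sel j y -> Sel j y' -> y = y'.
  move=> [Gy hy _] [Gy' hy' _]; apply: tG => //.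
  by exists (g j); split; rewrite /cball /= ltW.
have Sel_inj i j y : Sel i y -> Sel j y -> i = j.
  move=> [_ hi mi] [_ hj mj]; case: (ltngtP i j) => // ij.
  - by exfalso; exact: mj _ ij hi.
  - by exfalso; exact: mi _ ij hj.
pose C j := [set z | exists2 y, Sel j y & mdist y z <= 3 * rho y].
pose Bs j := [set z | exists2 y, Sel j y & mdist y z <= rho y].
have CE j y : Sel j y -> C j = cball y (3 * rho y) /\ Bs j = cball y (rho y).
  move=> Sy; split; apply/seteqP; split => z.
  - by move=> [y' Sy' hz]; rewrite (Sel_uniq _ _ _ Sy Sy').
  - by move=> hz; exists y.
  - by move=> [y' Sy' hz]; rewrite (Sel_uniq _ _ _ Sy Sy').
  - by move=> hz; exists y.
have CE0 j : ~ (exists y, Sel j y) -> C j = set0 /\ Bs j = set0.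
  move=> nS; split; apply/seteqP; split => z //.
  - by move=> [y Sy _]; apply: nS; exists y.
  - by move=> [y Sy _]; apply: nS; exists y.
have mBs j : measurable (Bs j : set (borel_type x0)).
  have [[y Sy]|nS] := pselect (exists y, Sel j y).
    by rewrite (CE _ _ Sy).2.
  by rewrite (CE0 _ nS).2.
have tBs : trivIset setT Bs.
  move=> i j _ _ [z [[y Sy hy] [y' Sy' hy']]].
  have yy : y = y'.
    case: Sy => Gy _ _; case: Sy' => Gy' _ _.
    by apply: tG => //; exists z; split.
  by rewrite -yy in Sy'; exact: Sel_inj Sy Sy'.
apply: (@le_trans _ _ (\sum_(0 <= j <oo) haus_term n (C j))%E).
  apply: ereal_inf_lbound; exists C => //; split.
    move=> x Nx; have [y Gy hxy] := covG x Nx.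
    have [j hj] := ex_j y Gy.
    have exP : exists j, mdist y (g j) < rho y by exists j.
    case: (ex_minnP exP) => m hm mmin.
    exists m => //; exists y => //; split => // i im hi.
    by have := mmin i hi; rewrite leqNgt im.
  move=> j; apply: diam_le; first exact: ltW.
  move=> p q [y Sy hp] [y' Sy' hq]; rewrite -(Sel_uniq _ _ _ Sy Sy') in hq.
  have [r0 rd _] := Hrho y (GN y (let: And3 Gy _ _ := Sy in Gy)).
  have := metric_triangle p y q; rewrite [mdist p y]metric_sym; lra.
apply: (@le_trans _ _ (\sum_(0 <= j <oo) (c%:E * mu (Bs j)))%E).
  apply: lee_nneseries; first by move=> j _ _; exact: haus_term_ge0.
  move=> j _.
  have [[y Sy]|nS] := pselect (exists y, Sel j y); last first.
    by rewrite (CE0 _ nS).1 haus_term_set0 mule_ge0 // lee_fin ltW.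
  rewrite (CE _ _ Sy).1 (CE _ _ Sy).2.
  have Gy : G y by case: Sy.
  have [r0 _ _] := Hrho y (GN y Gy).
  have := haus_term_cball n y r0; move/le_trans; apply.
  apply: (@le_trans _ _ (c%:E * (rho y ^+ n)%:E)%E).
    rewrite -EFinM lee_fin ler_wpM2r ?exprn_ge0 ?ltW//.
    by rewrite /c ltrDl.
  by apply: lee_wpmul2l; [rewrite lee_fin ltW | exact: rho_mu (GN y Gy)].
rewrite nneseriesZl; last by move=> j _.
have hU : mu (\bigcup_j Bs j) = (\sum_(0 <= j <oo) mu (Bs j))%E.
  rewrite /mu measure_bigcup //; apply: eq_eseriesl => i; exact: in_setT.
rewrite -hU.
apply: le_trans (lee_wpmul2l _ (le_trans (le_measure _ _ _ (subsetT _)) muT)) _.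
- by rewrite lee_fin ltW.
- by rewrite inE; apply: bigcup_measurable => j _.
- by rewrite inE.
by rewrite -EFinM lee_fin /e' mulrC divfK ?gt_eqF.
Qed.
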